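(* (Computing the weighted, repeated argument sum.) For complex numbers $x_0,\dots,x_q$ (repetitions allowed) and $\tau\in\mathbb{R}$, $$\sum_{j=0}^q x_j\,e^{-\tau[x_0,\ldots,x_q,x_j]}=\begin{cases}(-x_0\tau-q)\,e^{-\tau[x_0,\ldots,x_q]}-\tau\,e^{-\tau[x_1,\ldots,x_q]}, & q>0,\\ -\tau x_0e^{-\tau x_0}, & q=0.\end{cases}$$
   Context: For $t\in\mathbb{R}$ and numbers $y_0,\dots,y_p$ (repetitions allowed), $e^{t[y_0,\ldots,y_p]}$ denotes the divided difference of $f(x)=e^{tx}$, $f[y_0,\ldots,y_p]=\frac{1}{2\pi i}\oint_\Gamma\frac{f(x)}{\prod_{i=0}^p(x-y_i)}\,\mathrm{d}x$, $\Gamma$ a positively oriented contour enclosing all $y_i$. The multiset $[x_0,\ldots,x_q,x_j]$ contains $x_j$ twice. *)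

(* Defs.v *)
From Stdlib Require Import Reals List.
From Coquelicot Require Import Coquelicot.
Import ListNotations.
Open Scope C_scope.

Definition Cexp (z : C) : C :=
  (exp (fst z) * cos (snd z), exp (fst z) * sin (snd z))%R.

Definition node_prod (ys : list C) (z : C) : C :=
  fold_right (fun y acc => (z - y) * acc) 1 ys.

(* Radius of a circle centred at 0 enclosing all nodes strictly. *)
Definition enclosing_radius (ys : list C) : R :=
  (1 + fold_right (fun y acc => Cmod y + acc) 0 ys)%R.

(* Divided difference f[y_0,...,y_p] defined (as in the paper) by the contour
   integral (1/(2 pi i)) \oint_Gamma f(x) / prod_i (x - y_i) dx, where Gamma is the
   positively oriented circle |x| = r, r = enclosing_radius ys, parametrised by
   x = r e^{i theta}, theta in [0, 2 pi], dx = i r e^{i theta} d theta. *)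
Definition divdiff (f : C -> C) (ys : list C) : C :=
  let r := enclosing_radius ys in
  / (2 * RtoC PI * Ci) *
  RInt (V := C_R_CompleteNormedModule)
    (fun theta : R =>
       let z := RtoC r * Cexp (RtoC 0 + Ci * RtoC theta) in
       f z / node_prod ys z * (Ci * z))
    0 (2 * PI).

Definition exp_dd (t : R) (ys : list C) : C :=
  divdiff (fun x => Cexp (RtoC t * x)) ys.

Definition Csum (l : list C) : C := fold_right Cplus 0 l.

(* Main.v *)
Require Import Defs.
From Stdlib Require Import Reals List Lra.
From Coquelicot Require Import Coquelicot.
Import ListNotations.
Open Scope C_scope.


Lemma isd_mult (f g : R -> R) x a b : is_derive f x a -> is_derive g x b ->
  is_derive (fun t => (f t * g t)%R) x (a * g x + f x * b)%R.
Proof. intros Ha Hb. exact (is_derive_mult f g x a b Ha Hb Rmult_comm). Qed.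
Lemma isd_plus (f g : R -> R) x a b : is_derive f x a -> is_derive g x b ->
  is_derive (fun t => (f t + g t)%R) x (a + b)%R.
Proof. intros Ha Hb. exact (is_derive_plus f g x a b Ha Hb). Qed.
Lemma isd_opp (f : R -> R) x a : is_derive f x a ->
  is_derive (fun t => (- f t)%R) x (- a)%R.
Proof. intros Ha. exact (is_derive_opp f x a Ha). Qed.
Lemma isd_minus (f g : R -> R) x a b : is_derive f x a -> is_derive g x b ->
  is_derive (fun t => (f t - g t)%R) x (a - b)%R.
Proof. intros Ha Hb. exact (is_derive_minus f g x a b Ha Hb). Qed.
Lemma isd_const (c x : R) : is_derive (fun _ => c) x 0%R.
Proof. exact (is_derive_const c x). Qed.
Lemma isd_ext (f g : R -> R) x a : (forall t, f t = g t) -> is_derive f x a -> is_derive g x a.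
Proof. intros H. apply is_derive_ext. exact H. Qed.
Lemma isd_eq (f : R -> R) x (a b : R) : @eq R a b -> is_derive f x a -> is_derive f x b.
Proof. intros ->; auto. Qed.
Lemma isd_inv (f : R -> R) x a : is_derive f x a -> f x <> 0%R ->
  is_derive (fun t => / f t)%R x (- a / (f x * f x))%R.
Proof. intros Ha Hn. 
  pose proof (is_derive_inv f x a Ha Hn) as H. eapply isd_eq; [|exact H].
  simpl. field. auto. Qed.
Lemma isd_comp (f g : R -> R) x a b : is_derive g x a -> is_derive f (g x) b ->
  is_derive (fun t => f (g t)) x (b * a)%R.
Proof. intros Ha Hb. pose proof (is_derive_comp f g x b a Hb Ha) as H.
  eapply isd_eq; [|exact H]. simpl. unfold scal; simpl; unfold mult; simpl. ring. Qed.
Lemma isd_exp x : is_derive exp x (exp x).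
Proof. auto_derive; auto; ring. Qed.
Lemma isd_cos x : is_derive cos x (- sin x)%R.
Proof. auto_derive; auto; ring. Qed.
Lemma isd_sin x : is_derive sin x (cos x)%R.
Proof. auto_derive; auto; ring. Qed.
Definition CD (f : R -> C) (x : R) (l : C) : Prop :=
  is_derive (fun t => fst (f t)) x (fst l) /\ is_derive (fun t => snd (f t)) x (snd l).

Lemma CD_ext f g x l : (forall t, f t = g t) -> CD f x l -> CD g x l.
Proof. intros H [H1 H2]; split.
 - apply (isd_ext (fun t => fst (f t))); auto. intro t; rewrite H; auto.
 - apply (isd_ext (fun t => snd (f t))); auto. intro t; rewrite H; auto. Qed.
Lemma CD_eq f x l l' : l = l' -> CD f x l -> CD f x l'.
Proof. intros ->; auto. Qed.
Lemma CD_const (c : C) x : CD (fun _ => c) x 0.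
Proof. split; apply isd_const. Qed.
Lemma CD_RtoC (g : R -> R) x d : is_derive g x d -> CD (fun t => RtoC (g t)) x (RtoC d).
Proof. intros H; split; simpl; [exact H| apply isd_const]. Qed.
Lemma CD_plus f g x a b : CD f x a -> CD g x b -> CD (fun t => f t + g t) x (a + b).
Proof. intros [H1 H2] [H3 H4]; split.
  - apply (isd_ext (fun t => fst (f t) + fst (g t))%R); [reflexivity|]. apply isd_plus; auto.
  - apply (isd_ext (fun t => snd (f t) + snd (g t))%R); [reflexivity|]. apply isd_plus; auto.
Qed.
Lemma CD_opp f x a : CD f x a -> CD (fun t => - f t) x (- a).
Proof. intros [H1 H2]; split.
  - apply (isd_ext (fun t => - fst (f t))%R); [reflexivity|]. apply isd_opp; auto.
  - apply (isd_ext (fun t => - snd (f t))%R); [reflexivity|]. apply isd_opp; auto.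
Qed.
Lemma CD_minus f g x a b : CD f x a -> CD g x b -> CD (fun t => f t - g t) x (a - b).
Proof. intros H1 H2. apply CD_plus; auto. apply CD_opp; auto. Qed.
Lemma CD_mult f g x a b : CD f x a -> CD g x b -> CD (fun t => f t * g t) x (a * g x + f x * b).
Proof. intros [H1 H2] [H3 H4]; split.
  - eapply isd_eq; [|apply (isd_ext (fun t => fst (f t) * fst (g t) - snd (f t) * snd (g t))%R);
     [reflexivity| apply isd_minus; apply isd_mult; eauto]]. simpl; ring.
  - eapply isd_eq; [|apply (isd_ext (fun t => fst (f t) * snd (g t) + snd (f t) * fst (g t))%R);
     [reflexivity| apply isd_plus; apply isd_mult; eauto]]. simpl; ring.
Qed.
Lemma fst_Cexp z : fst (Cexp z) = (exp (fst z) * cos (snd z))%R.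
Proof. reflexivity. Qed.
Lemma snd_Cexp z : snd (Cexp z) = (exp (fst z) * sin (snd z))%R.
Proof. reflexivity. Qed.
Lemma CD_Cexp f x a : CD f x a -> CD (fun t => Cexp (f t)) x (a * Cexp (f x)).
Proof. intros [H1 H2]. split.
  - assert (K : is_derive (fun t => exp (fst (f t)) * cos (snd (f t)))%R x
       ((exp (fst (f x)) * fst a) * cos (snd (f x)) + exp (fst (f x)) * (- sin (snd (f x)) * snd a))%R).
    { apply (isd_mult (fun t => exp (fst (f t))) (fun t => cos (snd (f t)))). apply (isd_comp exp (fun t => fst (f t))); [exact H1|apply isd_exp]. apply (isd_comp cos (fun t => snd (f t))); [exact H2|apply isd_cos]. }
    apply (isd_ext (fun t => exp (fst (f t)) * cos (snd (f t)))%R).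
    { intro t. rewrite fst_Cexp. reflexivity. }
    eapply isd_eq; [|exact K]. 
    change (fst (a * Cexp (f x))) with (fst a * fst (Cexp (f x)) - snd a * snd (Cexp (f x)))%R.
    rewrite fst_Cexp, snd_Cexp. ring.
  - assert (K : is_derive (fun t => exp (fst (f t)) * sin (snd (f t)))%R x
       ((exp (fst (f x)) * fst a) * sin (snd (f x)) + exp (fst (f x)) * (cos (snd (f x)) * snd a))%R).
    { apply (isd_mult (fun t => exp (fst (f t))) (fun t => sin (snd (f t)))). apply (isd_comp exp (fun t => fst (f t))); [exact H1|apply isd_exp]. apply (isd_comp sin (fun t => snd (f t))); [exact H2|apply isd_sin]. }
    apply (isd_ext (fun t => exp (fst (f t)) * sin (snd (f t)))%R).
    { intro t. rewrite snd_Cexp. reflexivity. }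
    eapply isd_eq; [|exact K]. 
    change (snd (a * Cexp (f x))) with (fst a * snd (Cexp (f x)) + snd a * fst (Cexp (f x)))%R.
    rewrite fst_Cexp, snd_Cexp. ring.
Qed.
Lemma C_nz_norm (w : C) : w <> 0 -> (fst w * fst w + snd w * snd w <> 0)%R.
Proof. destruct w as [p q]; simpl; intros H E. apply H.
  assert (p = 0%R) by nra. assert (q = 0%R) by nra. subst; reflexivity. Qed.
Lemma CD_inv f x a : CD f x a -> f x <> 0 -> CD (fun t => / f t) x (- a / (f x * f x)).
Proof. intros [H1 H2] Hn. pose proof (C_nz_norm _ Hn) as Hn'.
  assert (Hd: is_derive (fun t => fst (f t) ^ 2 + snd (f t) ^ 2)%R x
     (fst a * fst (f x) + fst (f x) * fst a + (snd a * snd (f x) + snd (f x) * snd a))%R).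
  { apply (isd_ext (fun t => fst (f t) * fst (f t) + snd (f t) * snd (f t))%R). intro; ring.
    apply isd_plus; apply isd_mult; auto. }
  assert (Hn2 : (fst (f x) ^ 2 + snd (f x) ^ 2 <> 0)%R) by (intro E; apply Hn'; nra).
  pose proof (isd_inv _ _ _ Hd Hn2) as Hi. 
  split.
  - eapply isd_eq; [|apply (isd_ext (fun t => fst (f t) * / (fst (f t) ^ 2 + snd (f t) ^ 2))%R);
     [intro t; reflexivity| apply isd_mult; eauto]].
    destruct (f x) as [p q] eqn:Hfx; destruct a as [a1 a2]; simpl in *. rewrite ?Hfx; simpl. field. split; auto. nra.
  - eapply isd_eq; [|apply (isd_ext (fun t => - snd (f t) * / (fst (f t) ^ 2 + snd (f t) ^ 2))%R);
     [intro t; reflexivity| apply isd_mult; [apply isd_opp|]; eauto]].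
    destruct (f x) as [p q] eqn:Hfx; destruct a as [a1 a2]; simpl in *. rewrite ?Hfx; simpl. field. split; auto. nra.
Qed.

Definition Cc2 (F : R -> R -> C) (x y : R) : Prop :=
  continuity_2d_pt (fun u v => fst (F u v)) x y /\ continuity_2d_pt (fun u v => snd (F u v)) x y.

Lemma cpt_of_derive (f : R -> R) x a : is_derive f x a -> continuity_pt f x.
Proof. intros H. apply continuity_pt_filterlim. apply (ex_derive_continuous f x). exists a; exact H. Qed.

Lemma Cc2_ext F G x y : (forall u v, F u v = G u v) -> Cc2 F x y -> Cc2 G x y.
Proof. intros H [H1 H2]; split.
 - apply (continuity_2d_pt_ext (fun u v => fst (F u v))); auto. intros u v; rewrite H; auto.
 - apply (continuity_2d_pt_ext (fun u v => snd (F u v))); auto. intros u v; rewrite H; auto. Qed.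
Lemma Cc2_const (c : C) x y : Cc2 (fun _ _ => c) x y.
Proof. split; apply continuity_2d_pt_const. Qed.
Lemma Cc2_RtoC (g : R -> R -> R) x y : continuity_2d_pt g x y -> Cc2 (fun u v => RtoC (g u v)) x y.
Proof. intros H; split; simpl; [exact H| apply continuity_2d_pt_const]. Qed.
Lemma Cc2_plus F G x y : Cc2 F x y -> Cc2 G x y -> Cc2 (fun u v => F u v + G u v) x y.
Proof. intros [H1 H2] [H3 H4]; split; simpl; apply continuity_2d_pt_plus; auto. Qed.
Lemma Cc2_opp F x y : Cc2 F x y -> Cc2 (fun u v => - F u v) x y.
Proof. intros [H1 H2]; split; simpl; apply continuity_2d_pt_opp; auto. Qed.
Lemma Cc2_minus F G x y : Cc2 F x y -> Cc2 G x y -> Cc2 (fun u v => F u v - G u v) x y.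
Proof. intros H1 H2; apply Cc2_plus; auto; apply Cc2_opp; auto. Qed.
Lemma Cc2_mult F G x y : Cc2 F x y -> Cc2 G x y -> Cc2 (fun u v => F u v * G u v) x y.
Proof. intros [H1 H2] [H3 H4]; split; simpl.
  - apply continuity_2d_pt_minus; apply continuity_2d_pt_mult; auto.
  - apply continuity_2d_pt_plus; apply continuity_2d_pt_mult; auto. Qed.
Lemma Cc2_Cexp F x y : Cc2 F x y -> Cc2 (fun u v => Cexp (F u v)) x y.
Proof. intros [H1 H2]; split; unfold Cexp; simpl; apply continuity_2d_pt_mult.
  - apply (continuity_1d_2d_pt_comp exp (fun u v => fst (F u v))); [eapply cpt_of_derive; apply isd_exp| exact H1].
  - apply (continuity_1d_2d_pt_comp cos (fun u v => snd (F u v))); [eapply cpt_of_derive; apply isd_cos| exact H2].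
  - apply (continuity_1d_2d_pt_comp exp (fun u v => fst (F u v))); [eapply cpt_of_derive; apply isd_exp| exact H1].
  - apply (continuity_1d_2d_pt_comp sin (fun u v => snd (F u v))); [eapply cpt_of_derive; apply isd_sin| exact H2].
Qed.
Lemma Cc2_inv F x y : Cc2 F x y -> F x y <> 0 -> Cc2 (fun u v => / F u v) x y.
Proof. intros [H1 H2] Hn. pose proof (C_nz_norm _ Hn) as Hn'.
  assert (Hd : continuity_2d_pt (fun u v => fst (F u v) ^ 2 + snd (F u v) ^ 2)%R x y).
  { apply (continuity_2d_pt_ext (fun u v => fst (F u v) * fst (F u v) + snd (F u v) * snd (F u v))%R).
    intros; ring. apply continuity_2d_pt_plus; apply continuity_2d_pt_mult; auto. }
  assert (Hn2 : (fst (F x y) ^ 2 + snd (F x y) ^ 2 <> 0)%R) by (intro E; apply Hn'; rewrite <- E; ring).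
  pose proof (continuity_2d_pt_inv _ _ _ Hd Hn2) as Hi.
  split; simpl.
  - apply (continuity_2d_pt_mult (fun u v => fst (F u v))); auto.
  - apply (continuity_2d_pt_mult (fun u v => - snd (F u v))%R); auto. apply continuity_2d_pt_opp; auto.
Qed.

Lemma c2d_1d (f : R -> R) x y : continuity_2d_pt (fun _ v => f v) x y -> continuity_pt f y.
Proof. intros H. apply continuity_pt_locally. intros eps. destruct (H eps) as [d Hd].
  exists d. intros v Hv. apply (Hd x v). rewrite Rminus_eq_0, Rabs_R0. apply cond_pos. exact Hv. Qed.

Lemma c2d_cont (f : R -> R) x y : continuity_2d_pt (fun _ v => f v) x y -> continuous f y.
Proof. intros H. apply continuity_pt_filterlim. eapply c2d_1d; eauto. Qed.

Lemma is_RInt_C (f : R -> C) a b (l : C) :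
  is_RInt (fun t => fst (f t)) a b (fst l) -> is_RInt (fun t => snd (f t)) a b (snd l) ->
  is_RInt (V := C_R_NormedModule) f a b l.
Proof. intros H1 H2. destruct l as [l1 l2].
 exact (is_RInt_fct_extend_pair (U:=R_NormedModule) (V:=R_NormedModule) f a b l1 l2 H1 H2).
Qed.
Lemma is_RInt_C' (f : R -> C) a b (l : C) :
  is_RInt (V := C_R_NormedModule) f a b l -> 
  is_RInt (fun t => fst (f t)) a b (fst l) /\ is_RInt (fun t => snd (f t)) a b (snd l).
Proof. intros H. split.
 exact (is_RInt_fct_extend_fst (U:=R_NormedModule) (V:=R_NormedModule) f a b l H).
 exact (is_RInt_fct_extend_snd (U:=R_NormedModule) (V:=R_NormedModule) f a b l H).
Qed.

Lemma Cc2_slice h x y z : Cc2 h x y -> Cc2 (fun _ v => h x v) z y.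
Proof. intros [H1 H2]; split; intros eps.
  - destruct (H1 eps) as [d Hd]. exists d. intros u v _ Hv. apply Hd; auto.
    rewrite Rminus_eq_0, Rabs_R0; apply cond_pos.
  - destruct (H2 eps) as [d Hd]. exists d. intros u v _ Hv. apply Hd; auto.
    rewrite Rminus_eq_0, Rabs_R0; apply cond_pos.
Qed.

Definition Ccont (f : R -> C) (t : R) := Cc2 (fun _ v => f v) 0 t.

Lemma is_RInt_Ccont (f : R -> C) a b : (forall t, Rmin a b <= t <= Rmax a b -> Ccont f t) ->
  is_RInt (V := C_R_NormedModule) f a b (RInt (fun t => fst (f t)) a b, RInt (fun t => snd (f t)) a b).
Proof. intros H. apply is_RInt_C; simpl; apply (RInt_correct (V:=R_CompleteNormedModule)); apply (ex_RInt_continuous (V:=R_CompleteNormedModule));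
  intros t Ht; destruct (H t Ht) as [H1 H2]; eapply c2d_cont; eauto. Qed.

Lemma RInt_C_eq (f : R -> C) a b l : is_RInt (V := C_R_NormedModule) f a b l ->
  RInt (V := C_R_CompleteNormedModule) f a b = l.
Proof. intros H. apply is_RInt_unique. exact H. Qed.

Lemma FTC_C (F dF : R -> C) a b : (forall t, Rmin a b <= t <= Rmax a b -> CD F t (dF t)) ->
  (forall t, Rmin a b <= t <= Rmax a b -> Ccont dF t) ->
  is_RInt (V := C_R_NormedModule) dF a b (F b - F a).
Proof. intros HD HC. apply is_RInt_C.
  - pose proof (is_RInt_derive (V:=R_CompleteNormedModule) (fun t => fst (F t)) (fun t => fst (dF t)) a b) as K.
    apply K. intros t Ht; apply (HD t Ht). intros t Ht; destruct (HC t Ht) as [H1 H2]; eapply c2d_cont; eauto.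
  - pose proof (is_RInt_derive (V:=R_CompleteNormedModule) (fun t => snd (F t)) (fun t => snd (dF t)) a b) as K.
    apply K. intros t Ht; apply (HD t Ht). intros t Ht; destruct (HC t Ht) as [H1 H2]; eapply c2d_cont; eauto.
Qed.

Lemma is_RInt_Cplus (f g : R -> C) a b l1 l2 : is_RInt (V := C_R_NormedModule) f a b l1 ->
  is_RInt (V := C_R_NormedModule) g a b l2 -> is_RInt (V := C_R_NormedModule) (fun t => f t + g t) a b (l1 + l2).
Proof. intros H1 H2. apply is_RInt_C'  in H1. apply is_RInt_C' in H2.
  destruct H1 as [A1 B1], H2 as [A2 B2]. apply is_RInt_C; simpl.
  - exact (is_RInt_plus _ _ a b _ _ A1 A2).
  - exact (is_RInt_plus _ _ a b _ _ B1 B2).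
Qed.

Lemma is_RInt_Cmult (f : R -> C) a b l (c : C) : is_RInt (V := C_R_NormedModule) f a b l ->
  is_RInt (V := C_R_NormedModule) (fun t => c * f t) a b (c * l).
Proof. intros H1. apply is_RInt_C' in H1. destruct H1 as [A1 B1]. apply is_RInt_C; simpl.
  - exact (is_RInt_minus _ _ a b _ _ (is_RInt_scal _ a b (fst c) _ A1) (is_RInt_scal _ a b (snd c) _ B1)).
  - exact (is_RInt_plus _ _ a b _ _ (is_RInt_scal _ a b (fst c) _ B1) (is_RInt_scal _ a b (snd c) _ A1)).
Qed.

Lemma is_RInt_Cext (f g : R -> C) a b l : (forall t, f t = g t) -> is_RInt (V := C_R_NormedModule) f a b l ->
   is_RInt (V := C_R_NormedModule) g a b l.
Proof. intros E H. apply (is_RInt_ext f); auto. Qed.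

Lemma loc_open (al be u : R) : (al < u < be)%R -> locally u (fun x => al < x < be)%R.
Proof. intros [H1 H2].
  assert (Hp : (0 < Rmin (u - al) (be - u))%R) by (apply Rmin_pos; lra).
  exists (mkposreal _ Hp). intros y Hy. 
  change (Rabs (y - u) < Rmin (u - al) (be - u))%R in Hy.
  pose proof (Rmin_l (u - al) (be - u)). pose proof (Rmin_r (u - al) (be - u)).
  apply Rabs_def2 in Hy. lra. Qed.

Lemma loc2_open (al be u t : R) : (al < u < be)%R -> locally_2d (fun x _ => al < x < be)%R u t.
Proof. intros [H1 H2].
  assert (Hp : (0 < Rmin (u - al) (be - u))%R) by (apply Rmin_pos; lra).
  exists (mkposreal _ Hp). intros y v Hy _. simpl in Hy.
  pose proof (Rmin_l (u - al) (be - u)). pose proof (Rmin_r (u - al) (be - u)).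
  apply Rabs_def2 in Hy. lra. Qed.

Lemma locally_impl' (x : R) (P Q : R -> Prop) : locally x P -> (forall y, P y -> Q y) -> locally x Q.
Proof. intros [e He] H. exists e. intros y Hy. apply H, He, Hy. Qed.

Lemma locally_2d_impl' (x y : R) (P Q : R -> R -> Prop) : locally_2d P x y -> (forall u v, P u v -> Q u v) -> locally_2d Q x y.
Proof. intros [e He] H. exists e. intros u v Hu Hv. apply H, He; auto. Qed.

Section Param.
Variables (h dh : R -> R -> C) (al be : R).
Hypothesis HD : forall u t, (al < u < be)%R -> CD (fun s => h s t) u (dh u t).
Hypothesis HDc : forall u t, (al < u < be)%R -> Cc2 dh u t.
Hypothesis Hc : forall u t, (al < u < be)%R -> Cc2 h u t.
Hypothesis Hk : forall u, (al < u < be)%R -> exists k, (forall t, CD k t (dh u t)) /\ k 0%R = k (2*PI)%R.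

Lemma dh_int0 u : (al < u < be)%R -> is_RInt (V := C_R_NormedModule) (dh u) 0 (2*PI) (RtoC 0%R).
Proof. intros Hu. destruct (Hk u Hu) as [k [Hk1 Hk2]].
  pose proof (FTC_C k (dh u) 0 (2*PI) (fun t _ => Hk1 t)) as K.
  replace (RtoC 0) with (k (2*PI)%R - k 0%R) by (rewrite Hk2; ring).
  apply K. intros t _. apply Cc2_slice. apply HDc; auto.
Qed.

Lemma comp_deriv1 u : (al < u < be)%R ->
  is_derive (fun s => RInt (fun t => fst (h s t)) 0 (2*PI)) u 0%R.
Proof. intros Hu.
  pose proof (is_derive_RInt_param (fun s t => fst (h s t)) 0 (2*PI) u) as K.
  assert (E : RInt (fun t => Derive (fun s => fst (h s t)) u) 0 (2*PI) = 0%R).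
  { rewrite (RInt_ext _ (fun t => fst (dh u t))).
    - apply is_RInt_unique. exact (proj1 (is_RInt_C' _ _ _ _ (dh_int0 u Hu))).
    - intros t _. apply is_derive_unique. apply (HD u t Hu). }
  apply (isd_eq _ _ _ _ E). apply K.
  - apply (locally_impl' _ _ _ (loc_open al be u Hu)). intros y Hy t _. exists (fst (dh y t)). apply (HD y t Hy).
  - intros t _. apply (continuity_2d_pt_ext_loc (fun u v => fst (dh u v))).
    + apply (locally_2d_impl' _ _ _ _ (loc2_open al be u t Hu)). intros u' v Hu'.
      symmetry. apply is_derive_unique. apply (HD u' v Hu').
    + apply (HDc u t Hu).
  - apply (locally_impl' _ _ _ (loc_open al be u Hu)). intros y Hy. apply (ex_RInt_continuous (V:=R_CompleteNormedModule)).
    intros t _. destruct (Cc2_slice _ _ _ 0%R (Hc y t Hy)) as [H1 H2]. eapply c2d_cont; eauto.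
Qed.

Lemma comp_deriv2 u : (al < u < be)%R ->
  is_derive (fun s => RInt (fun t => snd (h s t)) 0 (2*PI)) u 0%R.
Proof. intros Hu.
  pose proof (is_derive_RInt_param (fun s t => snd (h s t)) 0 (2*PI) u) as K.
  assert (E : RInt (fun t => Derive (fun s => snd (h s t)) u) 0 (2*PI) = 0%R).
  { rewrite (RInt_ext _ (fun t => snd (dh u t))).
    - apply is_RInt_unique. exact (proj2 (is_RInt_C' _ _ _ _ (dh_int0 u Hu))).
    - intros t _. apply is_derive_unique. apply (HD u t Hu). }
  apply (isd_eq _ _ _ _ E). apply K.
  - apply (locally_impl' _ _ _ (loc_open al be u Hu)). intros y Hy t _. exists (snd (dh y t)). apply (HD y t Hy).
  - intros t _. apply (continuity_2d_pt_ext_loc (fun u v => snd (dh u v))).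
    + apply (locally_2d_impl' _ _ _ _ (loc2_open al be u t Hu)). intros u' v Hu'.
      symmetry. apply is_derive_unique. apply (HD u' v Hu').
    + apply (HDc u t Hu).
  - apply (locally_impl' _ _ _ (loc_open al be u Hu)). intros y Hy. apply (ex_RInt_continuous (V:=R_CompleteNormedModule)).
    intros t _. destruct (Cc2_slice _ _ _ 0%R (Hc y t Hy)) as [H1 H2]. eapply c2d_cont; eauto.
Qed.

Lemma RInt_h u : (al < u < be)%R -> RInt (V := C_R_CompleteNormedModule) (h u) 0 (2*PI) =
   (RInt (fun t => fst (h u t)) 0 (2*PI), RInt (fun t => snd (h u t)) 0 (2*PI)).
Proof. intros Hu. apply RInt_C_eq. apply is_RInt_Ccont. intros t _. apply Cc2_slice, Hc, Hu. Qed.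

Lemma param_const a b : (al < a)%R -> (a <= b)%R -> (b < be)%R ->
  RInt (V := C_R_CompleteNormedModule) (h a) 0 (2*PI) = RInt (V := C_R_CompleteNormedModule) (h b) 0 (2*PI).
Proof. intros H1 H2 H3. destruct (Rle_lt_or_eq_dec _ _ H2) as [Hlt|<-]; [|reflexivity].
  rewrite (RInt_h a), (RInt_h b) by lra. f_equal.
  - apply (eq_is_derive (fun s => RInt (fun t => fst (h s t)) 0 (2*PI))); auto.
    intros t Ht. apply comp_deriv1. lra.
  - apply (eq_is_derive (fun s => RInt (fun t => snd (h s t)) 0 (2*PI))); auto.
    intros t Ht. apply comp_deriv2. lra.
Qed.
End Param.

Lemma isd_id x : is_derive (fun t : R => t) x 1%R.
Proof. auto_derive; auto. Qed.

Definition Ec (th : R) : C := Cexp (RtoC 0 + Ci * RtoC th).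
Definition Zc (r th : R) : C := RtoC r * Ec th.

Lemma Ec_eq th : Ec th = (cos th, sin th).
Proof. unfold Ec, Cexp. simpl.
  replace (0 + (0 * th - 1 * 0))%R with 0%R by ring.
  replace (0 + (0 * 0 + 1 * th))%R with th by ring. rewrite exp_0. f_equal; ring. Qed.

Lemma Ec_per : Ec 0 = Ec (2 * PI)%R.
Proof. rewrite !Ec_eq, cos_0, sin_0, cos_2PI, sin_2PI. reflexivity. Qed.
Lemma Zc_per r : Zc r 0 = Zc r (2 * PI)%R.
Proof. unfold Zc; rewrite Ec_per; reflexivity. Qed.

Lemma Cmod_Ec th : Cmod (Ec th) = 1%R.
Proof. rewrite Ec_eq. unfold Cmod; simpl.
  replace (cos th * (cos th * 1) + sin th * (sin th * 1))%R with 1%R.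
  apply sqrt_1. pose proof (sin2_cos2 th) as K. unfold Rsqr in K. nra. Qed.

Lemma Cmod_Zc r th : Cmod (Zc r th) = Rabs r.
Proof. unfold Zc. rewrite Cmod_mult, Cmod_Ec, Cmod_R. ring. Qed.

Lemma Ec_nz th : Ec th <> 0.
Proof. intro E. pose proof (Cmod_Ec th) as H. rewrite E, Cmod_0 in H. lra. Qed.

Lemma CD_Ec th : CD Ec th (Ci * Ec th).
Proof. unfold Ec. eapply CD_eq; [|apply (CD_Cexp (fun t => RtoC 0 + Ci * RtoC t))].
  2: { apply CD_plus. apply CD_const. apply (CD_mult (fun _ => Ci) (fun t => RtoC t)). apply CD_const.
       apply CD_RtoC, isd_id. }
  ring. Qed.

Lemma CD_Zc_th r th : CD (fun t => Zc r t) th (Ci * Zc r th).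
Proof. unfold Zc. eapply CD_eq; [|apply (CD_mult (fun _ => RtoC r) Ec)].
  2: apply CD_const. 2: apply CD_Ec. ring. Qed.

Lemma CD_Zc_r s th : CD (fun u => Zc u th) s (Ec th).
Proof. unfold Zc. eapply CD_eq; [|apply (CD_mult (fun u => RtoC u) (fun _ => Ec th))].
  2: apply CD_RtoC, isd_id. 2: apply CD_const. ring. Qed.

Lemma Cc2_Zc x y : Cc2 Zc x y.
Proof. unfold Zc, Ec. apply (Cc2_mult (fun u v => RtoC u) (fun u v => Cexp (RtoC 0 + Ci * RtoC v))).
  - apply (Cc2_RtoC (fun u v => u)). apply continuity_2d_pt_id1.
  - apply (Cc2_Cexp (fun u v => RtoC 0 + Ci * RtoC v)). apply (Cc2_plus (fun _ _ => RtoC 0) (fun u v => Ci * RtoC v)).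
    apply Cc2_const. apply (Cc2_mult (fun _ _ => Ci) (fun u v => RtoC v)). apply Cc2_const.
    apply (Cc2_RtoC (fun u v => v)). apply continuity_2d_pt_id2.
Qed.

Fixpoint npd (ys : list C) (w : C) : C :=
  match ys with
  | [] => 0
  | y :: ys' => node_prod ys' w + (w - y) * npd ys' w
  end.

Lemma node_prod_cons y ys w : node_prod (y :: ys) w = (w - y) * node_prod ys w.
Proof. reflexivity. Qed.

Lemma CD_np ys (g : R -> C) x g' : CD g x g' ->
  CD (fun s => node_prod ys (g s)) x (g' * npd ys (g x)).
Proof. intros Hg. induction ys as [|y ys IH].
  - simpl. eapply CD_eq; [|apply CD_const]. ring.
  - eapply CD_eq; [|apply (CD_mult (fun s => g s - y) (fun s => node_prod ys (g s)))].
    2: { apply CD_minus; [exact Hg| apply CD_const]. }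
    2: exact IH.
    simpl. ring.
Qed.

Lemma Cc2_np ys Z x y : Cc2 Z x y -> Cc2 (fun u v => node_prod ys (Z u v)) x y.
Proof. intros HZ. induction ys as [|a ys IH].
  - apply (Cc2_const 1).
  - apply (Cc2_mult (fun u v => Z u v - a) (fun u v => node_prod ys (Z u v))); auto.
    apply Cc2_minus; auto. apply Cc2_const.
Qed.

Lemma Cc2_npd ys Z x y : Cc2 Z x y -> Cc2 (fun u v => npd ys (Z u v)) x y.
Proof. intros HZ. induction ys as [|a ys IH].
  - apply (Cc2_const 0).
  - apply (Cc2_plus (fun u v => node_prod ys (Z u v)) (fun u v => (Z u v - a) * npd ys (Z u v))).
    apply Cc2_np; auto.
    apply (Cc2_mult (fun u v => Z u v - a) (fun u v => npd ys (Z u v))); auto.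
    apply Cc2_minus; auto. apply Cc2_const.
Qed.

Definition gf (t : R) (ys : list C) (w : C) : C := Cexp (RtoC t * w) / node_prod ys w.
Definition Gd (t : R) (ys : list C) (w : C) : C :=
  RtoC t * Cexp (RtoC t * w) / node_prod ys w - Cexp (RtoC t * w) * npd ys w / (node_prod ys w * node_prod ys w).

Lemma CD_gf t ys (g : R -> C) x g' : CD g x g' -> node_prod ys (g x) <> 0 ->
  CD (fun s => gf t ys (g s)) x (g' * Gd t ys (g x)).
Proof. intros Hg Hn. unfold gf, Gd.
  eapply CD_eq; [|apply (CD_mult (fun s => Cexp (RtoC t * g s)) (fun s => / node_prod ys (g s)))].
  2: { apply (CD_Cexp (fun s => RtoC t * g s)). apply (CD_mult (fun _ => RtoC t) g); [apply CD_const| exact Hg]. }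
  2: { apply (CD_inv (fun s => node_prod ys (g s))); [apply CD_np; exact Hg| exact Hn]. }
  field. auto.
Qed.

Lemma Cc2_gf t ys Z x y : Cc2 Z x y -> node_prod ys (Z x y) <> 0 -> Cc2 (fun u v => gf t ys (Z u v)) x y.
Proof. intros HZ Hn. unfold gf.
  apply (Cc2_mult (fun u v => Cexp (RtoC t * Z u v)) (fun u v => / node_prod ys (Z u v))).
  - apply (Cc2_Cexp (fun u v => RtoC t * Z u v)). apply (Cc2_mult (fun _ _ => RtoC t) Z); auto. apply Cc2_const.
  - apply (Cc2_inv (fun u v => node_prod ys (Z u v))); auto. apply Cc2_np; auto.
Qed.

Lemma Cc2_Gd t ys Z x y : Cc2 Z x y -> node_prod ys (Z x y) <> 0 -> Cc2 (fun u v => Gd t ys (Z u v)) x y.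
Proof. intros HZ Hn. unfold Gd.
  assert (HE : Cc2 (fun u v => Cexp (RtoC t * Z u v)) x y).
  { apply (Cc2_Cexp (fun u v => RtoC t * Z u v)). apply (Cc2_mult (fun _ _ => RtoC t) Z); auto. apply Cc2_const. }
  assert (HP : Cc2 (fun u v => node_prod ys (Z u v)) x y) by (apply Cc2_np; auto).
  apply (Cc2_minus (fun u v => RtoC t * Cexp (RtoC t * Z u v) / node_prod ys (Z u v))
          (fun u v => Cexp (RtoC t * Z u v) * npd ys (Z u v) / (node_prod ys (Z u v) * node_prod ys (Z u v)))).
  - apply (Cc2_mult (fun u v => RtoC t * Cexp (RtoC t * Z u v)) (fun u v => / node_prod ys (Z u v))).
    apply (Cc2_mult (fun _ _ => RtoC t) (fun u v => Cexp (RtoC t * Z u v))); auto. apply Cc2_const.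
    apply (Cc2_inv (fun u v => node_prod ys (Z u v))); auto.
  - apply (Cc2_mult (fun u v => Cexp (RtoC t * Z u v) * npd ys (Z u v)) (fun u v => / (node_prod ys (Z u v) * node_prod ys (Z u v)))).
    apply (Cc2_mult (fun u v => Cexp (RtoC t * Z u v)) (fun u v => npd ys (Z u v))); auto. apply Cc2_npd; auto.
    apply (Cc2_inv (fun u v => node_prod ys (Z u v) * node_prod ys (Z u v))).
    apply (Cc2_mult (fun u v => node_prod ys (Z u v)) (fun u v => node_prod ys (Z u v))); auto.
    apply Cmult_neq_0; auto.
Qed.

Definition rho (ys : list C) : R := fold_right (fun y acc => Cmod y + acc)%R 0%R ys.

Lemma rho_nonneg ys : (0 <= rho ys)%R.
Proof. induction ys; simpl. lra. pose proof (Cmod_ge_0 a). lra. Qed.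

Lemma rho_in ys y : In y ys -> (Cmod y <= rho ys)%R.
Proof. induction ys as [|a ys IH]; simpl; [tauto|]. intros [->|H].
  - pose proof (rho_nonneg ys); lra.
  - pose proof (Cmod_ge_0 a); specialize (IH H); lra. Qed.

Lemma sub_nz (w y : C) : (Cmod y < Cmod w)%R -> w - y <> 0.
Proof. intros H E. apply Cminus_eq_contra in E; auto. intro; subst; lra. Qed.

Lemma np_nz ys w : (rho ys < Cmod w)%R -> node_prod ys w <> 0.
Proof. induction ys as [|a ys IH]; simpl; intros H.
  - apply C1_nz.
  - pose proof (Cmod_ge_0 a). pose proof (rho_nonneg ys). apply Cmult_neq_0.
    apply sub_nz; lra. apply IH; lra.
Qed.

Definition hint (t : R) (ys : list C) (r th : R) : C := gf t ys (Zc r th) * (Ci * Zc r th).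

Lemma exp_dd_eq t ys : exp_dd t ys =
  / (2 * RtoC PI * Ci) * RInt (V := C_R_CompleteNormedModule) (hint t ys (enclosing_radius ys)) 0 (2 * PI).
Proof. reflexivity. Qed.

Lemma Cc2_Ec x y : Cc2 (fun _ v => Ec v) x y.
Proof. unfold Ec. apply (Cc2_Cexp (fun u v => RtoC 0 + Ci * RtoC v)). apply (Cc2_plus (fun _ _ => RtoC 0) (fun u v => Ci * RtoC v)).
    apply Cc2_const. apply (Cc2_mult (fun _ _ => Ci) (fun u v => RtoC v)). apply Cc2_const.
    apply (Cc2_RtoC (fun u v => v)). apply continuity_2d_pt_id2.
Qed.

Lemma np_Zc_nz ys u th : (rho ys < u)%R -> node_prod ys (Zc u th) <> 0.
Proof. intros H. apply np_nz. rewrite Cmod_Zc. pose proof (rho_nonneg ys). rewrite Rabs_pos_eq; lra. Qed.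

Lemma Cc2_hint t ys u th : (rho ys < u)%R -> Cc2 (hint t ys) u th.
Proof. intros H. unfold hint.
  apply (Cc2_mult (fun u v => gf t ys (Zc u v)) (fun u v => Ci * Zc u v)).
  - apply Cc2_gf. apply Cc2_Zc. apply np_Zc_nz; auto.
  - apply (Cc2_mult (fun _ _ => Ci) Zc). apply Cc2_const. apply Cc2_Zc.
Qed.

Definition dh_rad t ys (u th : R) : C :=
  Ec th * Gd t ys (Zc u th) * (Ci * Zc u th) + gf t ys (Zc u th) * (Ci * Ec th).

Lemma rad_indep_aux t ys r1 r2 : (rho ys < r1)%R -> (r1 <= r2)%R ->
  RInt (V := C_R_CompleteNormedModule) (hint t ys r1) 0 (2 * PI) =
  RInt (V := C_R_CompleteNormedModule) (hint t ys r2) 0 (2 * PI).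
Proof. intros H1 H2.
  apply (param_const (hint t ys) (dh_rad t ys) (rho ys) (r2 + 1)); try lra.
  - intros u th Hu. unfold hint, dh_rad.
    eapply CD_eq; [| apply (CD_mult (fun s => gf t ys (Zc s th)) (fun s => Ci * Zc s th))].
    2: { apply (CD_gf t ys (fun s => Zc s th)). apply CD_Zc_r. apply np_Zc_nz; lra. }
    2: { apply (CD_mult (fun _ => Ci) (fun s => Zc s th)). apply CD_const. apply CD_Zc_r. }
    ring.
  - intros u th Hu. unfold dh_rad.
    apply (Cc2_plus (fun u v => Ec v * Gd t ys (Zc u v) * (Ci * Zc u v)) (fun u v => gf t ys (Zc u v) * (Ci * Ec v))).
    + apply (Cc2_mult (fun u v => Ec v * Gd t ys (Zc u v)) (fun u v => Ci * Zc u v)).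
      * apply (Cc2_mult (fun u v => Ec v) (fun u v => Gd t ys (Zc u v))). apply Cc2_Ec.
        apply Cc2_Gd. apply Cc2_Zc. apply np_Zc_nz; lra.
      * apply (Cc2_mult (fun _ _ => Ci) Zc). apply Cc2_const. apply Cc2_Zc.
    + apply (Cc2_mult (fun u v => gf t ys (Zc u v)) (fun u v => Ci * Ec v)).
      * apply Cc2_gf. apply Cc2_Zc. apply np_Zc_nz; lra.
      * apply (Cc2_mult (fun _ _ => Ci) (fun _ v => Ec v)). apply Cc2_const. apply Cc2_Ec.
  - intros u th Hu. apply Cc2_hint. lra.
  - intros u Hu. exists (fun th => gf t ys (Zc u th) * Ec th). split.
    + intros th. unfold dh_rad.
      eapply CD_eq; [| apply (CD_mult (fun s => gf t ys (Zc u s)) Ec)].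
      2: { apply (CD_gf t ys (fun s => Zc u s)). apply CD_Zc_th. apply np_Zc_nz; lra. }
      2: apply CD_Ec.
      unfold Zc. ring.
    + rewrite <- Zc_per, <- Ec_per. reflexivity.
Qed.

Lemma rad_indep t ys r1 r2 : (rho ys < r1)%R -> (rho ys < r2)%R ->
  RInt (V := C_R_CompleteNormedModule) (hint t ys r1) 0 (2 * PI) =
  RInt (V := C_R_CompleteNormedModule) (hint t ys r2) 0 (2 * PI).
Proof. intros H1 H2. destruct (Rle_dec r1 r2).
  - apply rad_indep_aux; auto.
  - symmetry. apply rad_indep_aux; auto. lra. Qed.

Lemma exp_dd_R t ys R0 : (rho ys < R0)%R -> exp_dd t ys =
  / (2 * RtoC PI * Ci) * RInt (V := C_R_CompleteNormedModule) (hint t ys R0) 0 (2 * PI).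
Proof. intros H. rewrite exp_dd_eq. f_equal. apply rad_indep; auto.
  unfold enclosing_radius. fold (rho ys). lra. Qed.

Lemma node_prod_app l1 l2 w : node_prod (l1 ++ l2) w = node_prod l1 w * node_prod l2 w.
Proof. induction l1 as [|a l1 IH]; simpl. ring. rewrite IH. fold (node_prod l1 w). ring. Qed.

Lemma rho_app l1 l2 : rho (l1 ++ l2) = (rho l1 + rho l2)%R.
Proof. induction l1 as [|a l1 IH]; simpl. ring. rewrite IH. ring. Qed.

Lemma sum_lemma (A B P Z : C) ys : P <> 0 -> (forall y, In y ys -> Z - y <> 0) ->
  Csum (map (fun y => y * (A / (P * ((Z - y) * 1)) * B)) ys) =
  A / P * B * (Z * Csum (map (fun y => / (Z - y)) ys) - RtoC (INR (length ys))).
Proof. intros HP. induction ys as [|y ys IH]; intros Hy.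
  - simpl. unfold Csum; simpl. field. auto.
  - simpl map. unfold Csum in *. simpl fold_right. rewrite IH by (intros; apply Hy; simpl; auto).
    cbn [length]. rewrite S_INR, RtoC_plus. assert (Z - y <> 0) by (apply Hy; simpl; auto). field. auto.
Qed.

Lemma npd_eq ys Z : (forall y, In y ys -> Z - y <> 0) ->
  npd ys Z = node_prod ys Z * Csum (map (fun y => / (Z - y)) ys).
Proof. induction ys as [|y ys IH]; intros Hy.
  - simpl. unfold Csum; simpl. ring.
  - simpl npd. rewrite IH by (intros; apply Hy; simpl; auto). rewrite node_prod_cons.
    unfold Csum; simpl map; simpl fold_right. assert (Z - y <> 0) by (apply Hy; simpl; auto). field. auto.
Qed.

Lemma Ccont_hint t ys u th : (rho ys < u)%R -> Ccont (hint t ys u) th.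
Proof. intros H. apply Cc2_slice. apply Cc2_hint. auto. Qed.

Lemma is_RInt_self (f : R -> C) a b : (forall t, Rmin a b <= t <= Rmax a b -> Ccont f t) ->
  is_RInt (V := C_R_NormedModule) f a b (RInt (V := C_R_CompleteNormedModule) f a b).
Proof. intros H. pose proof (is_RInt_Ccont f a b H) as K. rewrite (RInt_C_eq _ _ _ _ K). exact K. Qed.

Lemma is_RInt_zero a b : is_RInt (V := C_R_NormedModule) (fun _ => RtoC 0) a b (RtoC 0).
Proof. pose proof (FTC_C (fun _ => RtoC 0) (fun _ => RtoC 0) a b (fun t _ => CD_const (RtoC 0) t)
     (fun t _ => Cc2_const (RtoC 0) 0 t)) as K. cbv beta in K.
  replace (RtoC 0 - RtoC 0) with (RtoC 0) in K by ring. exact K. Qed.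

Lemma is_RInt_Csum (F : C -> R -> C) (l : list C) :
  (forall y, In y l -> forall th, Ccont (F y) th) ->
  is_RInt (V := C_R_NormedModule) (fun th => Csum (map (fun y => y * F y th) l)) 0 (2 * PI)
    (Csum (map (fun y => y * RInt (V := C_R_CompleteNormedModule) (F y) 0 (2 * PI)) l)).
Proof. induction l as [|y l IH]; intros H.
  - unfold Csum; simpl. apply is_RInt_zero.
  - unfold Csum in *; simpl map; simpl fold_right.
    apply (is_RInt_Cplus (fun th => y * F y th) (fun th => fold_right Cplus 0 (map (fun y0 => y0 * F y0 th) l))).
    + apply is_RInt_Cmult. apply is_RInt_self. intros; apply H; simpl; auto.
    + apply IH. intros; apply H; simpl; auto.
Qed.

Definition Fd t xs (R0 th : R) : C :=
  (Ci * Zc R0 th) * Gd t xs (Zc R0 th) * Zc R0 th + gf t xs (Zc R0 th) * (Ci * Zc R0 th).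

Lemma pointwise t a xs' R0 th : (rho (a :: xs') < R0)%R ->
  Csum (map (fun y => y * hint t ((a :: xs') ++ [y]) R0 th) (a :: xs')) =
  (RtoC t * a - RtoC (INR (length xs'))) * hint t (a :: xs') R0 th +
  (RtoC t * hint t xs' R0 th + RtoC (-1) * Fd t (a :: xs') R0 th).
Proof. intros HR. set (xs := a :: xs') in *. set (Z := Zc R0 th) in *.
  assert (HZ : Cmod Z = R0) by (unfold Z; rewrite Cmod_Zc; pose proof (rho_nonneg xs); apply Rabs_pos_eq; lra).
  assert (Hy : forall y, In y xs -> Z - y <> 0).
  { intros y Hy. apply sub_nz. pose proof (rho_in _ _ Hy). lra. }
  assert (HP : node_prod xs Z <> 0) by (apply np_nz; lra).
  assert (HP' : node_prod xs' Z <> 0).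
  { apply np_nz. unfold xs in HR; simpl in HR. pose proof (Cmod_ge_0 a). lra. }
  assert (Ha : Z - a <> 0) by (apply Hy; unfold xs; simpl; auto).
  rewrite (map_ext_in (fun y => y * hint t (xs ++ [y]) R0 th)
     (fun y => y * (Cexp (RtoC t * Z) / (node_prod xs Z * ((Z - y) * 1)) * (Ci * Z)))).
  2: { intros y _. unfold hint, gf. fold Z. rewrite node_prod_app. reflexivity. }
  rewrite sum_lemma by auto.
  unfold Fd, hint, Gd, gf. fold Z. rewrite npd_eq by auto.
  set (Ssum := Csum (map (fun y => / (Z - y)) xs)).
  replace (length xs) with (S (length xs')) by reflexivity. rewrite S_INR, RtoC_plus.
  unfold xs in *. rewrite node_prod_cons in *. 
  field. split; auto.
Qed.

Lemma Cc2_Fd t xs R0 th : (rho xs < R0)%R -> Cc2 (Fd t xs) R0 th.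
Proof. intros H. unfold Fd.
  assert (HZ : Cc2 Zc R0 th) by apply Cc2_Zc.
  assert (HCZ : Cc2 (fun u v => Ci * Zc u v) R0 th) by (apply (Cc2_mult (fun _ _ => Ci) Zc); [apply Cc2_const| exact HZ]).
  apply (Cc2_plus (fun u v => (Ci * Zc u v) * Gd t xs (Zc u v) * Zc u v) (fun u v => gf t xs (Zc u v) * (Ci * Zc u v))).
  - apply (Cc2_mult (fun u v => (Ci * Zc u v) * Gd t xs (Zc u v)) Zc); auto.
    apply (Cc2_mult (fun u v => Ci * Zc u v) (fun u v => Gd t xs (Zc u v))); auto.
    apply Cc2_Gd; auto. apply np_Zc_nz; auto.
  - apply (Cc2_mult (fun u v => gf t xs (Zc u v)) (fun u v => Ci * Zc u v)); auto.
    apply Cc2_gf; auto. apply np_Zc_nz; auto.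
Qed.

Lemma main_int t a xs' R0 : (rho (a :: xs') < R0)%R ->
  (forall y, In y (a :: xs') -> (rho ((a :: xs') ++ [y]) < R0)%R) ->
  Csum (map (fun y => y * RInt (V := C_R_CompleteNormedModule) (hint t ((a :: xs') ++ [y]) R0) 0 (2 * PI)) (a :: xs')) =
  (RtoC t * a - RtoC (INR (length xs'))) * RInt (V := C_R_CompleteNormedModule) (hint t (a :: xs') R0) 0 (2 * PI) +
  RtoC t * RInt (V := C_R_CompleteNormedModule) (hint t xs' R0) 0 (2 * PI).
Proof. intros HR Hj.
  assert (HR' : (rho xs' < R0)%R) by (simpl in HR; pose proof (Cmod_ge_0 a); lra).
  pose proof (is_RInt_Csum (fun y => hint t ((a :: xs') ++ [y]) R0) (a :: xs')) as K1.
  assert (K1' : is_RInt (V := C_R_NormedModule)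
       (fun th => Csum (map (fun y => y * hint t ((a :: xs') ++ [y]) R0 th) (a :: xs'))) 0 (2 * PI)
       (Csum (map (fun y => y * RInt (V := C_R_CompleteNormedModule) (hint t ((a :: xs') ++ [y]) R0) 0 (2 * PI)) (a :: xs')))).
  { apply K1. intros y Hy th. apply Ccont_hint. apply Hj; auto. }
  clear K1.
  set (F := fun th => gf t (a :: xs') (Zc R0 th) * Zc R0 th).
  assert (KF : is_RInt (V := C_R_NormedModule) (Fd t (a :: xs') R0) 0 (2 * PI) (F (2 * PI)%R - F 0%R)).
  { apply FTC_C.
    - intros th _. unfold F, Fd.
      eapply CD_eq; [| apply (CD_mult (fun s => gf t (a :: xs') (Zc R0 s)) (fun s => Zc R0 s))].
      2: { apply (CD_gf t (a :: xs') (fun s => Zc R0 s)). apply CD_Zc_th. apply np_Zc_nz; auto. }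
      2: apply CD_Zc_th.
      ring.
    - intros th _. apply Cc2_slice. apply Cc2_Fd. auto. }
  assert (EF : F (2 * PI)%R - F 0%R = RtoC 0) by (unfold F; rewrite <- Zc_per; ring).
  rewrite EF in KF.
  set (c1 := RtoC t * a - RtoC (INR (length xs'))).
  assert (K2 : is_RInt (V := C_R_NormedModule)
     (fun th => c1 * hint t (a :: xs') R0 th + (RtoC t * hint t xs' R0 th + RtoC (-1) * Fd t (a :: xs') R0 th))
     0 (2 * PI)
     (c1 * RInt (V := C_R_CompleteNormedModule) (hint t (a :: xs') R0) 0 (2 * PI) +
      (RtoC t * RInt (V := C_R_CompleteNormedModule) (hint t xs' R0) 0 (2 * PI) + RtoC (-1) * RtoC 0))).
  { apply (is_RInt_Cplus (fun th => c1 * hint t (a :: xs') R0 th)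
                         (fun th => RtoC t * hint t xs' R0 th + RtoC (-1) * Fd t (a :: xs') R0 th)).
    - apply is_RInt_Cmult. apply is_RInt_self. intros; apply Ccont_hint; auto.
    - apply (is_RInt_Cplus (fun th => RtoC t * hint t xs' R0 th) (fun th => RtoC (-1) * Fd t (a :: xs') R0 th)).
      + apply is_RInt_Cmult. apply is_RInt_self. intros; apply Ccont_hint; auto.
      + apply is_RInt_Cmult. exact KF. }
  assert (K2' := is_RInt_Cext _ (fun th => Csum (map (fun y => y * hint t ((a :: xs') ++ [y]) R0 th) (a :: xs')))
     _ _ _ (fun th => eq_sym (pointwise t a xs' R0 th HR)) K2).
  rewrite <- (RInt_C_eq _ _ _ _ K1'). rewrite (RInt_C_eq _ _ _ _ K2'). fold c1. ring.
Qed.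

Lemma Csum_scal (c : C) (I : C -> C) l :
  Csum (map (fun y => y * (c * I y)) l) = c * Csum (map (fun y => y * I y) l).
Proof. induction l as [|y l IH]; unfold Csum in *; simpl. ring. rewrite IH. ring. Qed.

Lemma main_generic t a xs' :
  Csum (map (fun y => y * exp_dd t ((a :: xs') ++ [y])) (a :: xs')) =
  (RtoC t * a - RtoC (INR (length xs'))) * exp_dd t (a :: xs') + RtoC t * exp_dd t xs'.
Proof.
  set (R0 := (1 + 2 * rho (a :: xs'))%R).
  pose proof (rho_nonneg (a :: xs')) as H0.
  assert (HR : (rho (a :: xs') < R0)%R) by (unfold R0; lra).
  assert (HR' : (rho xs' < R0)%R) by (simpl in HR; pose proof (Cmod_ge_0 a); lra).
  assert (Hj : forall y, In y (a :: xs') -> (rho ((a :: xs') ++ [y]) < R0)%R).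
  { intros y Hy. rewrite rho_app. simpl (rho [y]). pose proof (rho_in _ _ Hy). unfold R0. lra. }
  rewrite (map_ext_in (fun y => y * exp_dd t ((a :: xs') ++ [y]))
    (fun y => y * (/ (2 * RtoC PI * Ci) * RInt (V := C_R_CompleteNormedModule) (hint t ((a :: xs') ++ [y]) R0) 0 (2 * PI)))).
  2: { intros y Hy. rewrite (exp_dd_R t _ R0); auto. }
  rewrite Csum_scal. rewrite main_int by auto.
  rewrite (exp_dd_R t (a :: xs') R0), (exp_dd_R t xs' R0) by auto. ring.
Qed.

Lemma Cexp_add u v : Cexp (u + v) = Cexp u * Cexp v.
Proof. unfold Cexp, Cmult, Cplus; cbn [fst snd]. rewrite exp_plus, cos_plus, sin_plus. f_equal; ring. Qed.

Lemma Cexp_zero (z : C) : z = RtoC 0 -> Cexp z = RtoC 1.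
Proof. intros ->. unfold Cexp, RtoC; cbn [fst snd]. rewrite exp_0, cos_0, sin_0. unfold RtoC. f_equal; ring. Qed.

Lemma RtoC_nz (s : R) : s <> 0%R -> RtoC s <> 0.
Proof. intros H E. apply H. injection E. auto. Qed.

Lemma is_RInt_eq (f g : R -> C) a b (l1 l2 : C) : is_RInt (V := C_R_NormedModule) f a b l1 ->
  is_RInt (V := C_R_NormedModule) g a b l2 -> (forall t, f t = g t) -> @eq C l1 l2.
Proof. intros H1 H2 E. apply (is_RInt_Cext f g) in H1; auto.
  rewrite <- (RInt_C_eq _ _ _ _ H1). apply RInt_C_eq; auto. Qed.

Section Single.
Variables (t : R) (a : C).
Let R0 := (1 + 2 * Cmod a)%R.
Lemma R0_pos : (0 < R0)%R.
Proof. unfold R0. pose proof (Cmod_ge_0 a). lra. Qed.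
Lemma rho_aa : (rho [a; a] < R0)%R.
Proof. unfold R0; simpl. lra. Qed.
Lemma rho_a : (rho [a] < R0)%R.
Proof. unfold R0; simpl. pose proof (Cmod_ge_0 a). lra. Qed.

Lemma Zc_R0 th : Cmod (Zc R0 th) = R0.
Proof. rewrite Cmod_Zc. apply Rabs_pos_eq. pose proof R0_pos; lra. Qed.

Lemma Za_nz th : Zc R0 th - a <> 0.
Proof. apply sub_nz. rewrite Zc_R0. unfold R0. pose proof (Cmod_ge_0 a). lra. Qed.

Lemma step2 : RInt (V := C_R_CompleteNormedModule) (hint t [a; a] R0) 0 (2 * PI) =
  RtoC t * RInt (V := C_R_CompleteNormedModule) (hint t [a] R0) 0 (2 * PI).
Proof.
  set (F := fun th => gf t [a] (Zc R0 th)).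
  set (Fd2 := fun th => (Ci * Zc R0 th) * Gd t [a] (Zc R0 th)).
  assert (KF : is_RInt (V := C_R_NormedModule) Fd2 0 (2 * PI) (F (2 * PI)%R - F 0%R)).
  { apply FTC_C.
    - intros th _. unfold F, Fd2. apply (CD_gf t [a] (fun s => Zc R0 s)). apply CD_Zc_th. apply np_Zc_nz. apply rho_a.
    - intros th _. unfold Ccont, Fd2.
      apply (Cc2_mult (fun u v => Ci * Zc R0 v) (fun u v => Gd t [a] (Zc R0 v))).
      + apply (Cc2_mult (fun _ _ => Ci) (fun u v => Zc R0 v)). apply Cc2_const. apply (Cc2_slice Zc R0 th 0%R), Cc2_Zc.
      + apply (Cc2_Gd t [a] (fun u v => Zc R0 v)). apply (Cc2_slice Zc R0 th 0%R), Cc2_Zc. apply np_Zc_nz, rho_a. }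
  assert (EF : F (2 * PI)%R - F 0%R = RtoC 0) by (unfold F; rewrite <- Zc_per; ring).
  rewrite EF in KF.
  assert (K1 := is_RInt_self (hint t [a; a] R0) 0 (2 * PI) (fun th _ => Ccont_hint t _ _ th rho_aa)).
  assert (K2 : is_RInt (V := C_R_NormedModule) (fun th => RtoC t * hint t [a] R0 th + RtoC (-1) * Fd2 th) 0 (2 * PI)
       (RtoC t * RInt (V := C_R_CompleteNormedModule) (hint t [a] R0) 0 (2 * PI) + RtoC (-1) * RtoC 0)).
  { apply (is_RInt_Cplus (fun th => RtoC t * hint t [a] R0 th) (fun th => RtoC (-1) * Fd2 th)).
    - apply is_RInt_Cmult. apply is_RInt_self. intros; apply Ccont_hint, rho_a.
    - apply is_RInt_Cmult. exact KF. }
  match goal with |- ?x = ?y => change (@eq C x y) end.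
  rewrite (is_RInt_eq _ _ _ _ _ _ K1 K2). ring.
  intros th. unfold hint, Fd2, gf, Gd. simpl node_prod. simpl npd.
  pose proof (Za_nz th). field. auto.
Qed.

Definition Wn (u th : R) : C := Zc R0 th - RtoC u * a.
Definition hn (u th : R) : C := Cexp (RtoC t * Wn u th) * / Wn u th * (Ci * Zc R0 th).
Definition dhn (u th : R) : C :=
  (- a) * (RtoC t * Cexp (RtoC t * Wn u th) / Wn u th - Cexp (RtoC t * Wn u th) / (Wn u th * Wn u th)) * (Ci * Zc R0 th).

Lemma Wn_nz u th : (-1/2 < u < 3/2)%R -> Wn u th <> 0.
Proof. intros Hu. unfold Wn. apply sub_nz. rewrite Zc_R0, Cmod_mult, Cmod_R.
  assert (Rabs u <= 3/2)%R by (unfold Rabs; destruct Rcase_abs; lra).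
  pose proof (Cmod_ge_0 a). pose proof (Rabs_pos u). unfold R0. nra. Qed.

Lemma Cc2_Wn x y : Cc2 Wn x y.
Proof. unfold Wn. apply (Cc2_minus (fun u v => Zc R0 v) (fun u v => RtoC u * a)).
  - apply (Cc2_slice Zc R0 y x), Cc2_Zc.
  - apply (Cc2_mult (fun u v => RtoC u) (fun _ _ => a)). apply (Cc2_RtoC (fun u v => u)), continuity_2d_pt_id1. apply Cc2_const.
Qed.

Lemma Cc2_CexpWn x y : Cc2 (fun u v => Cexp (RtoC t * Wn u v)) x y.
Proof. apply (Cc2_Cexp (fun u v => RtoC t * Wn u v)). apply (Cc2_mult (fun _ _ => RtoC t) Wn). apply Cc2_const. apply Cc2_Wn. Qed.

Lemma Cc2_CiZ x y : Cc2 (fun u v => Ci * Zc R0 v) x y.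
Proof. apply (Cc2_mult (fun _ _ => Ci) (fun u v => Zc R0 v)). apply Cc2_const. apply (Cc2_slice Zc R0 y x), Cc2_Zc. Qed.

Lemma step3 : RInt (V := C_R_CompleteNormedModule) (hn 0) 0 (2 * PI) =
              RInt (V := C_R_CompleteNormedModule) (hn 1) 0 (2 * PI).
Proof.
  apply (param_const hn dhn (-1/2) (3/2)); try lra.
  - intros u th Hu. unfold hn, dhn.
    assert (HW : CD (fun s => Wn s th) u (- a)).
    { unfold Wn. eapply CD_eq; [|apply (CD_minus (fun _ => Zc R0 th) (fun s => RtoC s * a))].
      2: apply CD_const. 2: { apply (CD_mult (fun s => RtoC s) (fun _ => a)). apply CD_RtoC, isd_id. apply CD_const. }
      simpl. ring. }
    eapply CD_eq; [|apply (CD_mult (fun s => Cexp (RtoC t * Wn s th) * / Wn s th) (fun _ => Ci * Zc R0 th))].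
    2: { apply (CD_mult (fun s => Cexp (RtoC t * Wn s th)) (fun s => / Wn s th)).
         - apply (CD_Cexp (fun s => RtoC t * Wn s th)). apply (CD_mult (fun _ => RtoC t) (fun s => Wn s th)).
           apply CD_const. exact HW.
         - apply (CD_inv (fun s => Wn s th)). exact HW. apply Wn_nz; auto. }
    2: apply CD_const.
    pose proof (Wn_nz u th Hu). field. auto.
  - intros u th Hu. unfold dhn.
    pose proof (Wn_nz u th Hu) as Hn.
    apply (Cc2_mult (fun u v => (- a) * (RtoC t * Cexp (RtoC t * Wn u v) / Wn u v - Cexp (RtoC t * Wn u v) / (Wn u v * Wn u v))) (fun u v => Ci * Zc R0 v)).
    2: apply Cc2_CiZ.
    apply (Cc2_mult (fun _ _ => - a) (fun u v => RtoC t * Cexp (RtoC t * Wn u v) / Wn u v - Cexp (RtoC t * Wn u v) / (Wn u v * Wn u v))).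
    apply Cc2_const.
    apply (Cc2_minus (fun u v => RtoC t * Cexp (RtoC t * Wn u v) / Wn u v) (fun u v => Cexp (RtoC t * Wn u v) / (Wn u v * Wn u v))).
    + apply (Cc2_mult (fun u v => RtoC t * Cexp (RtoC t * Wn u v)) (fun u v => / Wn u v)).
      apply (Cc2_mult (fun _ _ => RtoC t) (fun u v => Cexp (RtoC t * Wn u v))). apply Cc2_const. apply Cc2_CexpWn.
      apply (Cc2_inv Wn). apply Cc2_Wn. auto.
    + apply (Cc2_mult (fun u v => Cexp (RtoC t * Wn u v)) (fun u v => / (Wn u v * Wn u v))). apply Cc2_CexpWn.
      apply (Cc2_inv (fun u v => Wn u v * Wn u v)). apply (Cc2_mult Wn Wn); apply Cc2_Wn. apply Cmult_neq_0; auto.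
  - intros u th Hu. unfold hn. pose proof (Wn_nz u th Hu) as Hn.
    apply (Cc2_mult (fun u v => Cexp (RtoC t * Wn u v) * / Wn u v) (fun u v => Ci * Zc R0 v)).
    apply (Cc2_mult (fun u v => Cexp (RtoC t * Wn u v)) (fun u v => / Wn u v)). apply Cc2_CexpWn.
    apply (Cc2_inv Wn). apply Cc2_Wn. auto. apply Cc2_CiZ.
  - intros u Hu. exists (fun th => (- a) * (Cexp (RtoC t * Wn u th) * / Wn u th)). split.
    + intros th. unfold dhn.
      assert (HW : CD (fun s => Wn u s) th (Ci * Zc R0 th)).
      { unfold Wn. eapply CD_eq; [|apply (CD_minus (fun s => Zc R0 s) (fun _ => RtoC u * a))].
        2: apply CD_Zc_th. 2: apply CD_const. ring. }
      eapply CD_eq; [|apply (CD_mult (fun _ => - a) (fun s => Cexp (RtoC t * Wn u s) * / Wn u s))].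
      2: apply CD_const.
      2: { apply (CD_mult (fun s => Cexp (RtoC t * Wn u s)) (fun s => / Wn u s)).
         - apply (CD_Cexp (fun s => RtoC t * Wn u s)). apply (CD_mult (fun _ => RtoC t) (fun s => Wn u s)).
           apply CD_const. exact HW.
         - apply (CD_inv (fun s => Wn u s)). exact HW. apply Wn_nz; auto. }
      pose proof (Wn_nz u th Hu). field. auto.
    + unfold Wn. rewrite <- Zc_per. reflexivity.
Qed.
End Single.

Lemma Cc2_hn t a u th : (-1/2 < u < 3/2)%R -> Cc2 (hn t a) u th.
Proof. intros Hu. unfold hn. pose proof (Wn_nz a u th Hu) as Hn.
    apply (Cc2_mult (fun u v => Cexp (RtoC t * Wn a u v) * / Wn a u v) (fun u v => Ci * Zc (1 + 2 * Cmod a) v)).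
    apply (Cc2_mult (fun u v => Cexp (RtoC t * Wn a u v)) (fun u v => / Wn a u v)). apply Cc2_CexpWn.
    apply (Cc2_inv (Wn a)). apply Cc2_Wn. auto. apply Cc2_CiZ.
Qed.

Definition h2 t (s th : R) : C := Ci * Cexp (RtoC t * Zc s th).
Definition dh2 t (s th : R) : C := Ci * (RtoC t * Ec th * Cexp (RtoC t * Zc s th)).

Lemma Cc2_CexpZ t x y : Cc2 (fun u v => Cexp (RtoC t * Zc u v)) x y.
Proof. apply (Cc2_Cexp (fun u v => RtoC t * Zc u v)). apply (Cc2_mult (fun _ _ => RtoC t) Zc). apply Cc2_const. apply Cc2_Zc. Qed.

Lemma step4a t : RInt (V := C_R_CompleteNormedModule) (h2 t 0) 0 (2 * PI) = RtoC (2 * PI) * Ci.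
Proof.
  assert (K : is_RInt (V := C_R_NormedModule) (fun _ => Ci) 0 (2 * PI) ((fun th => RtoC th * Ci) (2 * PI)%R - (fun th => RtoC th * Ci) 0%R)).
  { apply (FTC_C (fun th => RtoC th * Ci) (fun _ => Ci)).
    - intros th _. eapply CD_eq; [|apply (CD_mult (fun s => RtoC s) (fun _ => Ci))].
      2: apply CD_RtoC, isd_id. 2: apply CD_const. simpl. ring.
    - intros; apply Cc2_const. }
  apply (is_RInt_Cext _ (h2 t 0)) in K.
  - rewrite (RInt_C_eq _ _ _ _ K). simpl. ring.
  - intros th. unfold h2. cbv beta. rewrite Cexp_zero. ring. unfold Zc. ring.
Qed.

Lemma step4 t r : (0 <= r)%R -> RInt (V := C_R_CompleteNormedModule) (h2 t r) 0 (2 * PI) = RtoC (2 * PI) * Ci.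
Proof. intros Hr. rewrite <- (step4a t).
  symmetry. apply (param_const (h2 t) (dh2 t) (-1) (r + 1)); try lra.
  - intros u th Hu. unfold h2, dh2.
    eapply CD_eq; [|apply (CD_mult (fun _ => Ci) (fun s => Cexp (RtoC t * Zc s th)))].
    2: apply CD_const.
    2: { apply (CD_Cexp (fun s => RtoC t * Zc s th)). apply (CD_mult (fun _ => RtoC t) (fun s => Zc s th)).
         apply CD_const. apply CD_Zc_r. }
    ring.
  - intros u th Hu. unfold dh2.
    apply (Cc2_mult (fun _ _ => Ci) (fun u v => RtoC t * Ec v * Cexp (RtoC t * Zc u v))). apply Cc2_const.
    apply (Cc2_mult (fun u v => RtoC t * Ec v) (fun u v => Cexp (RtoC t * Zc u v))).
    apply (Cc2_mult (fun _ _ => RtoC t) (fun _ v => Ec v)). apply Cc2_const. apply Cc2_Ec.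
    apply Cc2_CexpZ.
  - intros u th Hu. unfold h2. apply (Cc2_mult (fun _ _ => Ci) (fun u v => Cexp (RtoC t * Zc u v))).
    apply Cc2_const. apply Cc2_CexpZ.
  - intros u Hu. destruct (Req_EM_T u 0) as [->|Hu0].
    + exists (fun th => RtoC t * Ec th). split.
      * intros th. unfold dh2. rewrite Cexp_zero by (unfold Zc; ring).
        eapply CD_eq; [|apply (CD_mult (fun _ => RtoC t) Ec)]. 2: apply CD_const. 2: apply CD_Ec. ring.
      * rewrite <- Ec_per. reflexivity.
    + exists (fun th => Cexp (RtoC t * Zc u th) * / RtoC u). split.
      * intros th. unfold dh2.
        eapply CD_eq; [|apply (CD_mult (fun s => Cexp (RtoC t * Zc u s)) (fun _ => / RtoC u))].
        2: { apply (CD_Cexp (fun s => RtoC t * Zc u s)). apply (CD_mult (fun _ => RtoC t) (fun s => Zc u s)).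
             apply CD_const. apply CD_Zc_th. }
        2: apply CD_const.
        unfold Zc. pose proof (RtoC_nz u Hu0). field. auto.
      * rewrite <- Zc_per. reflexivity.
Qed.

Lemma exp_dd_aa t a : exp_dd t [a; a] = RtoC t * Cexp (RtoC t * a).
Proof.
  set (R0 := (1 + 2 * Cmod a)%R).
  assert (HR0 : (0 < R0)%R) by (unfold R0; pose proof (Cmod_ge_0 a); lra).
  rewrite (exp_dd_R t [a; a] R0) by (unfold R0; simpl; lra).
  unfold R0. rewrite step2. fold R0.
  assert (E1 : @eq C (RInt (V := C_R_CompleteNormedModule) (hint t [a] R0) 0 (2 * PI))
     (Cexp (RtoC t * a) * RInt (V := C_R_CompleteNormedModule) (hn t a 1) 0 (2 * PI))).
  { apply (is_RInt_eq (hint t [a] R0) (fun th => Cexp (RtoC t * a) * hn t a 1 th) 0 (2 * PI)).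
    - apply is_RInt_self. intros; apply Ccont_hint. unfold R0; simpl; pose proof (Cmod_ge_0 a); lra.
    - apply is_RInt_Cmult. apply is_RInt_self. intros th _. apply Cc2_slice. apply Cc2_hn. lra.
    - intros th. unfold hint, hn, gf, Wn. simpl node_prod. fold R0.
      pose proof (Za_nz a th) as Hz. fold R0 in Hz.
      replace (Cexp (RtoC t * Zc R0 th)) with (Cexp (RtoC t * a) * Cexp (RtoC t * (Zc R0 th - RtoC 1 * a)))
        by (rewrite <- Cexp_add; f_equal; ring).
      replace (Zc R0 th - RtoC 1 * a) with (Zc R0 th - a) by ring. field. auto. }
  rewrite E1. unfold R0. rewrite <- step3. fold R0.
  assert (E2 : RInt (V := C_R_CompleteNormedModule) (hn t a 0) 0 (2 * PI) = RInt (V := C_R_CompleteNormedModule) (h2 t R0) 0 (2 * PI)).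
  { apply RInt_ext. intros th _. unfold hn, h2, Wn. fold R0.
    assert (Hz : Zc R0 th <> 0).
    { intro E. pose proof (Cmod_Zc R0 th) as K. rewrite E, Cmod_0, Rabs_pos_eq in K; lra. }
    match goal with |- ?x = ?y => change (@eq C x y) end.
    replace (Zc R0 th - RtoC 0 * a) with (Zc R0 th) by ring. field. auto. }
  rewrite E2, step4 by lra.
  assert (HPI : RtoC PI <> 0) by (apply RtoC_nz; apply PI_neq0).
  rewrite RtoC_mult. field. split; auto. apply Ci_nz.
Qed.

Theorem corollary1 (q : nat) (x : nat -> C) (tau : R) :
  let xs := map x (seq 0 (S q)) in
  let lhs := Csum (map (fun j => x j * exp_dd (- tau) (xs ++ [x j])) (seq 0 (S q))) in
  ((0 < q)%nat ->
     lhs = (- x 0%nat * RtoC tau - RtoC (INR q)) * exp_dd (- tau) xs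
           - RtoC tau * exp_dd (- tau) (map x (seq 1 q))) /\
  (q = 0%nat ->
     lhs = - RtoC tau * x 0%nat * Cexp (RtoC (- tau) * x 0%nat)).
Proof.
  cbv zeta. split.
  - intros Hq.
    rewrite <- (map_map x (fun y => y * exp_dd (- tau) (map x (seq 0 (S q)) ++ [y]))).
    change (map x (seq 0 (S q))) with (x 0%nat :: map x (seq 1 q)).
    rewrite main_generic. rewrite length_map, length_seq. rewrite RtoC_opp. ring.
  - intros ->. simpl. unfold Csum; simpl. rewrite exp_dd_aa. rewrite RtoC_opp. ring.
Qed.
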